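(* With $N_U(B)$ as defined below, let $\mathcal{N}(B)$ be the number of $(\eta_1,\dots,\eta_8,\alpha_1,\alpha_2,\alpha_3)\in\mathbb{Z}^{11}$ satisfying $$\eta_1^2\eta_2\alpha_1^3+\eta_7\alpha_2^2+\eta_4\eta_5^2\eta_6^3\eta_8^4\alpha_3=0,$$ $\eta_1,\dots,\eta_8,\alpha_2\ge1$, the height conditions $$\eta_1^2\eta_2^4\eta_3^6\eta_4^5\eta_5^4\eta_6^3\eta_7^3\eta_8^2\le B,\quad |\eta_1^2\eta_2^3\eta_3^4\eta_4^3\eta_5^2\eta_6\eta_7^2\alpha_1|\le B,\quad |\alpha_3|\le B,\quad \eta_1^3\eta_2^6\eta_3^9\eta_4^7\eta_5^5\eta_6^3\eta_7^5\eta_8\alpha_2\le B^2,$$ and the coprimality conditions $\gcd(\alpha_1,\eta_2\cdots\eta_8)=\gcd(\alpha_2,\eta_1\cdots\eta_6\eta_8)=\gcd(\alpha_3,\eta_1\cdots\eta_7)=1$, $\gcd(\eta_8,\eta_1\cdots\eta_5\eta_7)=\gcd(\eta_7,\eta_1\eta_2\eta_4\eta_5\eta_6)=\gcd(\eta_6,\eta_1\cdots\eta_4)=1$, $\gcd(\eta_5,\eta_1\eta_2\eta_3)=\gcd(\eta_4,\eta_1\eta_2)=\gcd(\eta_3,\eta_1)=1$. Then $N_U(B)=2\mathcal{N}(B)+O(B^{2/3})$.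
   Context: $N_U(B)=\frac12\#\{\mathbf{x}=(x_0,x_1,x_2,x_3)\in\mathbb{Z}^4:\ x_0^2=x_1x_2^3+x_1^3x_3,\ x_1\ne0,\ \gcd(x_1,x_2,x_3)=1,\ |x_i|\le B\ (1\le i\le3),\ |x_0|\le B^2\}$. *)

(* Defs.v *)
From Stdlib Require Import ZArith Reals List.
Import ListNotations.
Open Scope R_scope.

Definition is_card {T : Type} (P : T -> Prop) (n : nat) : Prop :=
  exists l : list T, NoDup l /\ (forall x, In x l <-> P x) /\ length l = n.

(* The set counted (with factor 1/2) by N_U(B): points (x0,x1,x2,x3) in Z^4. *)
Definition SU (B : R) (x : Z * Z * Z * Z) : Prop :=
  let '(x0, x1, x2, x3) := x in
  (x0 * x0 = x1 * x2 ^ 3 + x1 ^ 3 * x3)%Z /\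
  x1 <> 0%Z /\
  Z.gcd (Z.gcd x1 x2) x3 = 1%Z /\
  IZR (Z.abs x1) <= B /\ IZR (Z.abs x2) <= B /\ IZR (Z.abs x3) <= B /\
  IZR (Z.abs x0) <= B ^ 2.

Definition SN (B : R) (t : list Z) : Prop :=
  match t with
  | [e1; e2; e3; e4; e5; e6; e7; e8; a1; a2; a3] =>
      (e1 ^ 2 * e2 * a1 ^ 3 + e7 * a2 ^ 2
         + e4 * e5 ^ 2 * e6 ^ 3 * e8 ^ 4 * a3 = 0)%Z /\
      (1 <= e1)%Z /\ (1 <= e2)%Z /\ (1 <= e3)%Z /\ (1 <= e4)%Z /\
      (1 <= e5)%Z /\ (1 <= e6)%Z /\ (1 <= e7)%Z /\ (1 <= e8)%Z /\
      (1 <= a2)%Z /\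
      IZR (e1^2 * e2^4 * e3^6 * e4^5 * e5^4 * e6^3 * e7^3 * e8^2) <= B /\
      IZR (Z.abs (e1^2 * e2^3 * e3^4 * e4^3 * e5^2 * e6 * e7^2 * a1)) <= B /\
      IZR (Z.abs a3) <= B /\
      IZR (e1^3 * e2^6 * e3^9 * e4^7 * e5^5 * e6^3 * e7^5 * e8 * a2) <= B ^ 2 /\
      Z.gcd a1 (e2 * e3 * e4 * e5 * e6 * e7 * e8) = 1%Z /\
      Z.gcd a2 (e1 * e2 * e3 * e4 * e5 * e6 * e8) = 1%Z /\
      Z.gcd a3 (e1 * e2 * e3 * e4 * e5 * e6 * e7) = 1%Z /\
      Z.gcd e8 (e1 * e2 * e3 * e4 * e5 * e7) = 1%Z /\
      Z.gcd e7 (e1 * e2 * e4 * e5 * e6) = 1%Z /\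
      Z.gcd e6 (e1 * e2 * e3 * e4) = 1%Z /\
      Z.gcd e5 (e1 * e2 * e3) = 1%Z /\
      Z.gcd e4 (e1 * e2) = 1%Z /\
      Z.gcd e3 e1 = 1%Z
  | _ => False
  end.

(* Main.v *)
Require Import Defs.
From Stdlib Require Import ZArith Reals List Lia Lra Psatz Arith Classical.
Import ListNotations.
Open Scope nat_scope.

From Stdlib Require Import Arith Lia.

Definition fv (n m z : nat) : nat*nat*nat*nat*nat*nat*nat*nat :=
  if n =? 0 then (0,0,0,0,0,0,0,0)
  else if 3*m <? n then (0,0,0,0,0,m,0,(n-3*m)/2)
  else if 2*m <? n then (0,0,0,0,(3*m-n)/2,n-2*m,0,0)
  else if 5*m <? 3*n then (0,0,0,2*m-n,(3*n-5*m)/2,0,0,0)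
  else if 3*m <? 2*n then (0,0,(5*m-3*n)/2,2*n-3*m,0,0,0,0)
  else if 3*m =? 2*n then
     (if 3*z <=? 5*n then (0,0,(5*n-3*z)/3,0,0,0,2*z-3*n,0)
      else (0,0,0,0,0,0,n/3,0))
  else if 4*m <? 3*n then (0,3*m-2*n,(3*n-4*m)/2,0,0,0,0,0)
  else ((4*m-3*n)/2,n-m,0,0,0,0,0,0).

Ltac divfacts :=
  repeat match goal with
  | |- context [?a / ?b] =>
      let q := fresh "q" in
      pose proof (Nat.div_mod a b ltac:(lia));
      pose proof (Nat.mod_upper_bound a b ltac:(lia));
      set (q := a / b) in *
  end.

Ltac splitifs :=
  repeat match goal with
  | |- context [Nat.eqb ?a ?b] => destruct (Nat.eqb_spec a b)
  | |- context [Nat.ltb ?a ?b] => destruct (Nat.ltb_spec a b)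
  | |- context [Nat.leb ?a ?b] => destruct (Nat.leb_spec a b)
  end.

Lemma fv_surj n m z :
  m <= n ->
  (3*m < 2*n -> 2*z = n + 3*m) ->
  (2*n < 3*m -> 2*z = 3*n) ->
  (0 < n -> 3*m = 2*n -> 3*n <= 2*z) ->
  let '(e1,e2,e3,e4,e5,e6,e7,e8) := fv n m z in
  2*e1+4*e2+6*e3+5*e4+4*e5+3*e6+3*e7+2*e8 = n /\
  2*e1+3*e2+4*e3+3*e4+2*e5+e6+2*e7 = m /\
  3*e1+6*e2+9*e3+7*e4+5*e5+3*e6+5*e7+e8 <= z /\
  (3*e1+6*e2+9*e3+7*e4+5*e5+3*e6+5*e7+e8 < z ->
     e1=0/\e2=0/\e3=0/\e4=0/\e5=0/\e6=0/\e8=0) /\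
  (0 < e8 -> e1=0/\e2=0/\e3=0/\e4=0/\e5=0/\e7=0) /\
  (0 < e7 -> e1=0/\e2=0/\e4=0/\e5=0/\e6=0) /\
  (0 < e6 -> e1=0/\e2=0/\e3=0/\e4=0) /\
  (0 < e5 -> e1=0/\e2=0/\e3=0) /\
  (0 < e4 -> e1=0/\e2=0) /\
  (0 < e3 -> e1=0) /\
  (m = n -> e2=0/\e3=0/\e4=0/\e5=0/\e6=0/\e7=0/\e8=0) /\
  (0 < n -> m = 0 -> e1=0/\e2=0/\e3=0/\e4=0/\e5=0/\e6=0/\e7=0).
Proof.
  intros H1 H2 H3 H4. unfold fv. splitifs; divfacts; lia.
Qed.

Lemma fv_inj v1 v2 v3 v4 v5 v6 v7 v8 w :
  (0 < v8 -> v1=0/\v2=0/\v3=0/\v4=0/\v5=0/\v7=0) ->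
  (0 < v7 -> v1=0/\v2=0/\v4=0/\v5=0/\v6=0) ->
  (0 < v6 -> v1=0/\v2=0/\v3=0/\v4=0) ->
  (0 < v5 -> v1=0/\v2=0/\v3=0) ->
  (0 < v4 -> v1=0/\v2=0) ->
  (0 < v3 -> v1=0) ->
  (0 < w -> v1=0/\v2=0/\v3=0/\v4=0/\v5=0/\v6=0/\v8=0) ->
  fv (2*v1+4*v2+6*v3+5*v4+4*v5+3*v6+3*v7+2*v8)
     (2*v1+3*v2+4*v3+3*v4+2*v5+v6+2*v7)
     (3*v1+6*v2+9*v3+7*v4+5*v5+3*v6+5*v7+v8+w) = (v1,v2,v3,v4,v5,v6,v7,v8).
Proof.
  intros H8 H7 H6 H5 H4 H3 Hw.
  try (destruct (Nat.eq_dec v8 0) as [->|?]; [|let H := fresh in pose proof (H8 ltac:(lia)) as H; decompose [and] H; subst]);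
  try (destruct (Nat.eq_dec v7 0) as [->|?]; [|let H := fresh in pose proof (H7 ltac:(lia)) as H; decompose [and] H; subst]);
  try (destruct (Nat.eq_dec v6 0) as [->|?]; [|let H := fresh in pose proof (H6 ltac:(lia)) as H; decompose [and] H; subst]);
  try (destruct (Nat.eq_dec v5 0) as [->|?]; [|let H := fresh in pose proof (H5 ltac:(lia)) as H; decompose [and] H; subst]);
  try (destruct (Nat.eq_dec v4 0) as [->|?]; [|let H := fresh in pose proof (H4 ltac:(lia)) as H; decompose [and] H; subst]);
  try (destruct (Nat.eq_dec v3 0) as [->|?]; [|let H := fresh in pose proof (H3 ltac:(lia)) as H; decompose [and] H; subst]);
  try (destruct (Nat.eq_dec w 0) as [->|?]; [|let H := fresh in pose proof (Hw ltac:(lia)) as H; decompose [and] H; subst]);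
  clear H8 H7 H6 H5 H4 H3 Hw;
  unfold fv; splitifs; divfacts;
  repeat match goal with |- (_,_) = (_,_) => apply pair_equal_spec; split end; lia.
Qed.

From Stdlib Require Import ZArith Lia.

Module V.
From mathcomp Require Import all_boot.

Definition vp (p : nat) (x : Z) : nat := logn p (Z.abs_nat x).
Definition isprime (p : nat) : Prop := prime p = true.

Lemma isprime_gt1 p : isprime p -> (1 < p)%coq_nat.
Proof. move=> H; apply/ltP; exact: prime_gt1. Qed.

Lemma Zdiv_dvdn (d : nat) (x : Z) : (Z.of_nat d | x)%Z <-> is_true (d %| Z.abs_nat x).
Proof.
split.
- move=> [z ->]; apply/dvdnP; exists (Z.abs_nat z).
  by rewrite Zabs2Nat.inj_mul Zabs2Nat.id.
- move/dvdnP=> [k Hk].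
  have: Z.abs x = (Z.of_nat k * Z.of_nat d)%Z.
    by rewrite -Nat2Z.inj_abs_nat Hk -Nat2Z.inj_mul.
  move=> Ha. case: (Z.abs_spec x) => [[_ Hx]|[_ Hx]].
  + exists (Z.of_nat k); lia.
  + exists (- Z.of_nat k)%Z; lia.
Qed.

Lemma abs_nat_pos x : x <> 0%Z -> is_true (0 < Z.abs_nat x).
Proof. move=> H; apply/ltP; lia. Qed.

Lemma vp_mul p x y : x <> 0%Z -> y <> 0%Z -> vp p (x * y) = (vp p x + vp p y)%coq_nat.
Proof.
move=> Hx Hy; rewrite /vp Zabs2Nat.inj_mul lognM //; exact: abs_nat_pos.
Qed.

Lemma vp_pow p x k : x <> 0%Z -> (0 <= k)%Z -> vp p (x ^ k) = (Z.to_nat k * vp p x)%coq_nat.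
Proof.
move=> Hx Hk. rewrite -(Z2Nat.id k Hk) Nat2Z.id. elim: (Z.to_nat k) => [|n IH].
- by rewrite /vp /= logn1.
- rewrite Nat2Z.inj_succ Z.pow_succ_r; last lia.
  rewrite Z.mul_comm vp_mul //; last by apply: Z.pow_nonzero; lia.
  rewrite IH. lia.
Qed.

Lemma vp_one p : vp p 1 = 0%coq_nat.
Proof. by rewrite /vp /= logn1. Qed.

Lemma vp_opp p x : vp p (- x) = vp p x.
Proof. by rewrite /vp; f_equal; lia. Qed.

Lemma natpowE p k : Nat.pow p k = p ^ k.
Proof. elim: k => [|k IH] //=. by rewrite expnS IH. Qed.

Lemma vp_dvd p x k : isprime p -> x <> 0%Z ->
  ((Z.of_nat p ^ Z.of_nat k | x)%Z <-> (k <= vp p x)%coq_nat).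
Proof.
move=> Hp Hx. rewrite -Nat2Z.inj_pow Zdiv_dvdn natpowE pfactor_dvdn //; last exact: abs_nat_pos.
split; [move/leP|move/leP]; done.
Qed.

Lemma vp_eq x y : (0 < x)%Z -> (0 < y)%Z ->
  (forall p, isprime p -> vp p x = vp p y) -> x = y.
Proof.
move=> Hx Hy H.
have: Z.abs_nat x = Z.abs_nat y.
  apply: eqn_from_log; try (apply: abs_nat_pos; lia).
  move=> p /=. case Hp: (prime p); first exact: H.
  by rewrite /logn Hp.
lia.
Qed.

Lemma prime_dvd_mul p a b : isprime p -> (Z.of_nat p | a * b)%Z ->
  (Z.of_nat p | a)%Z \/ (Z.of_nat p | b)%Z.
Proof.
move=> Hp; rewrite !Zdiv_dvdn Zabs2Nat.inj_mul Euclid_dvdM //.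
by case/orP; [left|right].
Qed.

Lemma exists_prime_dvd (n : Z) : (1 < n)%Z -> exists p, isprime p /\ (Z.of_nat p | n)%Z.
Proof.
move=> Hn. have H1: is_true (1 < Z.abs_nat n) by apply/ltP; lia.
case: (pdivP H1) => p Hp Hd. exists p; split => //. by apply/Zdiv_dvdn.
Qed.

Definition pprod (N : nat) (f : nat -> nat) : nat :=
  \prod_(p < N) p ^ (if prime p then f p else 0).

Lemma pprod_gt0 N f : is_true (0 < pprod N f).
Proof.
rewrite /pprod; apply: prodn_gt0 => i; rewrite expn_gt0.
case Hp: (prime i); last by rewrite orbT.
by rewrite prime_gt0.
Qed.

Lemma logn_pprod (N : nat) (f : nat -> nat) q : prime q ->
  logn q (pprod N f) = if q < N then f q else 0.
Proof.
move=> Hq. elim: N => [|N IH].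
- by rewrite /pprod big_ord0 logn1.
- rewrite /pprod big_ord_recr /= lognM; first last.
  + rewrite expn_gt0; case Hp: (prime N); last by rewrite orbT.
    by rewrite prime_gt0.
  + exact: pprod_gt0.
  rewrite -/(pprod N f) IH lognX.
  case Hp: (prime N).
  + rewrite logn_prime //. case: (ltngtP q N) => [H|H|E] /=.
    * have ->: q < N.+1 by apply: ltn_trans H _.
      by rewrite muln0 addn0.
    * have ->: (q < N.+1) = false by apply/negbTE; rewrite -leqNgt.
      by rewrite muln0.
    * by rewrite E ltnSn muln1.
  + rewrite mul0n addn0. case: (ltngtP q N) => [H|H|E].
    * have ->: q < N.+1 by apply: ltn_trans H _.
      done.
    * have ->: (q < N.+1) = false by apply/negbTE; rewrite -leqNgt.
      done.
    * by move: Hp; rewrite -E Hq.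
Qed.

Lemma vp_construct (X : Z) (f : nat -> nat) : X <> 0%Z ->
  (forall p, isprime p -> (0 < f p)%coq_nat -> (Z.of_nat p | X)%Z) ->
  exists y, (0 < y)%Z /\ forall p, isprime p -> vp p y = f p.
Proof.
move=> HX Hf. exists (Z.of_nat (pprod (Z.abs_nat X).+1 f)). split.
- have := pprod_gt0 (Z.abs_nat X).+1 f. move/ltP. lia.
- move=> p Hp. rewrite /vp Zabs2Nat.id logn_pprod //.
  case: ifP => // Hlt. case: (posnP (f p)) => [//|Hpos].
  have := Hf p Hp (elimT ltP Hpos). rewrite Zdiv_dvdn => Hd.
  have := dvdn_leq (abs_nat_pos _ HX) Hd. rewrite ltnS leqNgt in Hlt; move/negbFE: Hlt => Hlt. by rewrite leqNgt Hlt.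
Qed.

End V.

From Stdlib Require Import ZArith Reals List Lia.
Import V.

Open Scope Z_scope.

Lemma pZ_pos p : isprime p -> 1 < Z.of_nat p.
Proof. intro H. apply isprime_gt1 in H. lia. Qed.

Lemma vp_dvd1 p x : isprime p -> x <> 0 -> ((Z.of_nat p | x) <-> (1 <= vp p x)%nat).
Proof.
  intros Hp Hx. rewrite <- (vp_dvd p x 1 Hp Hx). replace (Z.of_nat p ^ Z.of_nat 1) with (Z.of_nat p) by (simpl Z.of_nat; symmetry; apply Z.pow_1_r). tauto.
Qed.

Lemma vp_exact p x k : isprime p -> x <> 0 ->
  (Z.of_nat p ^ Z.of_nat k | x) -> ~ (Z.of_nat p ^ Z.of_nat (S k) | x) -> vp p x = k.
Proof.
  intros Hp Hx H1 H2. rewrite vp_dvd in H1 by auto. rewrite vp_dvd in H2 by auto. lia.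
Qed.

Lemma gcd_one_iff a b : Z.gcd a b = 1 <->
  forall p, isprime p -> ~ ((Z.of_nat p | a) /\ (Z.of_nat p | b)).
Proof.
  split.
  - intros H p Hp [Ha Hb]. pose proof (Z.gcd_greatest _ _ _ Ha Hb) as Hd. rewrite H in Hd.
    apply Z.divide_1_r_nonneg in Hd; [|lia]. pose proof (pZ_pos p Hp). lia.
  - intros H. pose proof (Z.gcd_nonneg a b) as Hn.
    destruct (Z.eq_dec (Z.gcd a b) 0) as [E|E].
    + apply Z.gcd_eq_0 in E. destruct E as [-> ->].
      exfalso. apply (H 2%nat); [reflexivity|]. split; apply Z.divide_0_r.
    + destruct (Z.eq_dec (Z.gcd a b) 1) as [E1|E1]; [exact E1|].
      destruct (exists_prime_dvd (Z.gcd a b)) as [p [Hp Hd]]; [lia|].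
      exfalso. apply (H p Hp). split; eapply Z.divide_trans; eauto.
      apply Z.gcd_divide_l. apply Z.gcd_divide_r.
Qed.

Lemma le_from_all (a b : nat) : (forall k, (k <= a)%nat <-> (k <= b)%nat) -> a = b.
Proof. intros H. pose proof (proj1 (H a) (le_n a)). pose proof (proj2 (H b) (le_n b)). lia. Qed.

Lemma vp_gcd p a b : isprime p -> a <> 0 -> b <> 0 ->
  vp p (Z.gcd a b) = Nat.min (vp p a) (vp p b).
Proof.
  intros Hp Ha Hb. assert (Hg: Z.gcd a b <> 0) by (intro E; apply Z.gcd_eq_0 in E; lia).
  apply le_from_all. intro k. rewrite <- vp_dvd by auto.
  split.
  - intro H. assert (k <= vp p a /\ k <= vp p b)%nat; [|lia].
    split; rewrite <- vp_dvd by auto; eapply Z.divide_trans; eauto.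
    apply Z.gcd_divide_l. apply Z.gcd_divide_r.
  - intro H. apply Z.gcd_greatest; rewrite vp_dvd by auto; lia.
Qed.

Lemma vp_le_of_dvd p d x : isprime p -> d <> 0 -> x <> 0 -> (d | x) -> (vp p d <= vp p x)%nat.
Proof.
  intros Hp Hd Hx H. rewrite <- vp_dvd by auto. eapply Z.divide_trans; [|exact H].
  rewrite vp_dvd by auto. lia.
Qed.


Lemma vp_abs p x : vp p (Z.abs x) = vp p x.
Proof. unfold vp. f_equal. lia. Qed.

Lemma vp_same_abs x y : x <> 0 -> y <> 0 -> (forall p, isprime p -> vp p x = vp p y) -> Z.abs x = Z.abs y.
Proof.
  intros Hx Hy H. apply vp_eq; try lia. intros p Hp. rewrite !vp_abs. auto.
Qed.

Lemma vp_le_dvd d x : 0 < d -> x <> 0 -> (forall p, isprime p -> (vp p d <= vp p x)%nat) -> (d | x).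
Proof.
  intros Hd Hx H.
  destruct (vp_construct x (fun p => vp p x - vp p d)%nat Hx) as [q [Hq Hv]].
  { intros p Hp Hpos. rewrite vp_dvd1 by auto. lia. }
  assert (E: Z.abs (d * q) = Z.abs x).
  { apply vp_same_abs; try lia. intros p Hp. rewrite vp_mul by lia. rewrite Hv by auto.
    specialize (H p Hp). lia. }
  exists (Z.sgn x * q). destruct (Z.abs_spec x) as [[? Hx']|[? Hx']];
    rewrite Z.abs_mul in E; rewrite (Z.abs_eq d), (Z.abs_eq q) in E by lia.
  - rewrite Z.sgn_pos by lia. lia.
  - rewrite Z.sgn_neg by lia. lia.
Qed.

From Stdlib Require Import ZArith List Lia.
Import V.
Open Scope Z_scope.

Definition M1 e1 e2 e3 e4 e5 e6 e7 e8 : Z := e1^2*e2^4*e3^6*e4^5*e5^4*e6^3*e7^3*e8^2.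
Definition AA e1 e2 e3 e4 e5 e6 e7 : Z := e1^2*e2^3*e3^4*e4^3*e5^2*e6*e7^2.
Definition M0 e1 e2 e3 e4 e5 e6 e7 e8 : Z := e1^3*e2^6*e3^9*e4^7*e5^5*e6^3*e7^5*e8.

Definition SNalg (e1 e2 e3 e4 e5 e6 e7 e8 a1 a2 a3 : Z) : Prop :=
      (e1 ^ 2 * e2 * a1 ^ 3 + e7 * a2 ^ 2
         + e4 * e5 ^ 2 * e6 ^ 3 * e8 ^ 4 * a3 = 0)%Z /\
      (1 <= e1)%Z /\ (1 <= e2)%Z /\ (1 <= e3)%Z /\ (1 <= e4)%Z /\
      (1 <= e5)%Z /\ (1 <= e6)%Z /\ (1 <= e7)%Z /\ (1 <= e8)%Z /\
      (1 <= a2)%Z /\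
      Z.gcd a1 (e2 * e3 * e4 * e5 * e6 * e7 * e8) = 1%Z /\
      Z.gcd a2 (e1 * e2 * e3 * e4 * e5 * e6 * e8) = 1%Z /\
      Z.gcd a3 (e1 * e2 * e3 * e4 * e5 * e6 * e7) = 1%Z /\
      Z.gcd e8 (e1 * e2 * e3 * e4 * e5 * e7) = 1%Z /\
      Z.gcd e7 (e1 * e2 * e4 * e5 * e6) = 1%Z /\
      Z.gcd e6 (e1 * e2 * e3 * e4) = 1%Z /\
      Z.gcd e5 (e1 * e2 * e3) = 1%Z /\
      Z.gcd e4 (e1 * e2) = 1%Z /\
      Z.gcd e3 e1 = 1%Z.

Ltac pos := repeat match goal with
  | |- 0 < _ * _ => apply Z.mul_pos_pos
  | |- 0 < _ ^ _ => apply Z.pow_pos_nonneg; [|discriminate]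
  end; first [eapply Z.lt_le_trans; [|eassumption]; reflexivity | assumption | lia].
Ltac nz := match goal with |- ?x <> 0 => cut (0 < x); [lia|pos] end.

Lemma cop_vp p a b : isprime p -> Z.gcd a b = 1 -> a <> 0 -> b <> 0 ->
  (0 < vp p a)%nat -> vp p b = 0%nat.
Proof.
  intros Hp H Ha Hb Hv. rewrite gcd_one_iff in H. specialize (H p Hp).
  destruct (Nat.eq_dec (vp p b) 0) as [E|E]; auto. exfalso. apply H.
  split; apply vp_dvd1; auto; lia.
Qed.

Ltac cz := repeat match goal with |- context [Z.to_nat (Zpos ?k)] =>
  let c := eval compute in (Z.to_nat (Zpos k)) in change (Z.to_nat (Zpos k)) with c end.
Ltac vpexp := repeat (rewrite vp_mul by nz); repeat (rewrite vp_pow by (try nz; lia)); cz.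

Lemma inj_val p e1 e2 e3 e4 e5 e6 e7 e8 a1 a2 a3 : isprime p ->
  SNalg e1 e2 e3 e4 e5 e6 e7 e8 a1 a2 a3 ->
  fv (vp p (M1 e1 e2 e3 e4 e5 e6 e7 e8)) (vp p (AA e1 e2 e3 e4 e5 e6 e7))
     (vp p (M0 e1 e2 e3 e4 e5 e6 e7 e8 * a2))
  = (vp p e1, vp p e2, vp p e3, vp p e4, vp p e5, vp p e6, vp p e7, vp p e8).
Proof.
  intros Hp (_&H1&H2&H3&H4&H5&H6&H7&H8&Ha2&_&Ca2&_&C8&C7&C6&C5&C4&C3).
  unfold M1, AA, M0. vpexp.
  assert (K8 := fun h => cop_vp p _ _ Hp C8 ltac:(lia) ltac:(nz) h).
  assert (K7 := fun h => cop_vp p _ _ Hp C7 ltac:(lia) ltac:(nz) h).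
  assert (K6 := fun h => cop_vp p _ _ Hp C6 ltac:(lia) ltac:(nz) h).
  assert (K5 := fun h => cop_vp p _ _ Hp C5 ltac:(lia) ltac:(nz) h).
  assert (K4 := fun h => cop_vp p _ _ Hp C4 ltac:(lia) ltac:(nz) h).
  assert (K3 := fun h => cop_vp p _ _ Hp C3 ltac:(lia) ltac:(nz) h).
  assert (Kw := fun h => cop_vp p _ _ Hp Ca2 ltac:(lia) ltac:(nz) h).
  revert K8 K7 K6 K5 K4 K3 Kw. vpexp. intros K8 K7 K6 K5 K4 K3 Kw.
  rewrite ?Nat.mul_1_l.
  set (v1 := vp p e1) in *. set (v2 := vp p e2) in *. set (v3 := vp p e3) in *.
  set (v4 := vp p e4) in *. set (v5 := vp p e5) in *. set (v6 := vp p e6) in *.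
  set (v7 := vp p e7) in *. set (v8 := vp p e8) in *. set (w := vp p a2) in *.
  apply fv_inj; intros; lia.
Qed.

Lemma vp_pos_dvd p x : isprime p -> x <> 0 -> (0 < vp p x)%nat -> (Z.of_nat p | x).
Proof. intros. apply vp_dvd1; auto; lia. Qed.

Lemma gcdA e1 e2 e3 e4 e5 e6 e7 e8 a1 a2 a3 :
  SNalg e1 e2 e3 e4 e5 e6 e7 e8 a1 a2 a3 ->
  Z.gcd (M1 e1 e2 e3 e4 e5 e6 e7 e8) (-(AA e1 e2 e3 e4 e5 e6 e7 * a1)) = AA e1 e2 e3 e4 e5 e6 e7.
Proof.
  intros (_&H1&H2&H3&H4&H5&H6&H7&H8&Ha2&Ca1&_).
  assert (HA: 0 < AA e1 e2 e3 e4 e5 e6 e7) by (unfold AA; pos).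
  set (u := e2*e3^2*e4^2*e5^2*e6^2*e7*e8^2).
  replace (M1 e1 e2 e3 e4 e5 e6 e7 e8) with (AA e1 e2 e3 e4 e5 e6 e7 * u) by (unfold M1, AA, u; ring).
  replace (-(AA e1 e2 e3 e4 e5 e6 e7 * a1)) with (AA e1 e2 e3 e4 e5 e6 e7 * (-a1)) by ring.
  rewrite Z.gcd_mul_mono_l. rewrite Z.abs_eq by lia.
  enough (Z.gcd u (-a1) = 1) as -> by ring.
  apply gcd_one_iff. intros p Hp [Hu Ha]. rewrite gcd_one_iff in Ca1.
  apply (Ca1 p Hp). split. { apply Z.divide_opp_r in Ha. rewrite Z.opp_involutive in Ha. exact Ha. }
  apply vp_pos_dvd; auto. nz. apply vp_dvd1 in Hu; auto; [|unfold u; nz].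
  revert Hu. unfold u. vpexp. lia.
Qed.

Lemma pos_eq_vp x y : 0 < x -> 0 < y -> (forall p, isprime p -> vp p x = vp p y) -> x = y.
Proof. apply vp_eq. Qed.

Lemma inj_main e1 e2 e3 e4 e5 e6 e7 e8 a1 a2 a3 f1 f2 f3 f4 f5 f6 f7 f8 b1 b2 b3 :
  SNalg e1 e2 e3 e4 e5 e6 e7 e8 a1 a2 a3 ->
  SNalg f1 f2 f3 f4 f5 f6 f7 f8 b1 b2 b3 ->
  M0 e1 e2 e3 e4 e5 e6 e7 e8 * a2 = M0 f1 f2 f3 f4 f5 f6 f7 f8 * b2 ->
  M1 e1 e2 e3 e4 e5 e6 e7 e8 = M1 f1 f2 f3 f4 f5 f6 f7 f8 ->
  -(AA e1 e2 e3 e4 e5 e6 e7 * a1) = -(AA f1 f2 f3 f4 f5 f6 f7 * b1) ->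
  - a3 = - b3 ->
  e1 = f1 /\ e2 = f2 /\ e3 = f3 /\ e4 = f4 /\ e5 = f5 /\ e6 = f6 /\ e7 = f7 /\ e8 = f8 /\
  a1 = b1 /\ a2 = b2 /\ a3 = b3.
Proof.
  intros HE HF E0 E1 E2 E3.
  assert (G: AA e1 e2 e3 e4 e5 e6 e7 = AA f1 f2 f3 f4 f5 f6 f7).
  { rewrite <- (gcdA _ _ _ _ _ _ _ _ _ _ _ HE), <- (gcdA _ _ _ _ _ _ _ _ _ _ _ HF), E1, E2. reflexivity. }
  assert (V: forall p, isprime p ->
    (vp p e1, vp p e2, vp p e3, vp p e4, vp p e5, vp p e6, vp p e7, vp p e8) =
    (vp p f1, vp p f2, vp p f3, vp p f4, vp p f5, vp p f6, vp p f7, vp p f8)).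
  { intros p Hp. rewrite <- (inj_val p _ _ _ _ _ _ _ _ _ _ _ Hp HE), <- (inj_val p _ _ _ _ _ _ _ _ _ _ _ Hp HF).
    rewrite E0, E1, G. reflexivity. }
  destruct HE as (_&H1&H2&H3&H4&H5&H6&H7&H8&Ha2&_).
  destruct HF as (_&K1&K2&K3&K4&K5&K6&K7&K8&Kb2&_).
  assert (e1 = f1 /\ e2 = f2 /\ e3 = f3 /\ e4 = f4 /\ e5 = f5 /\ e6 = f6 /\ e7 = f7 /\ e8 = f8) as (->&->&->&->&->&->&->&->).
  { repeat split; apply pos_eq_vp; try lia; intros p Hp; specialize (V p Hp); inversion V; auto. }
  assert (HA: 0 < AA f1 f2 f3 f4 f5 f6 f7) by (unfold AA; pos).
  assert (HM: 0 < M0 f1 f2 f3 f4 f5 f6 f7 f8) by (unfold M0; pos).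
  repeat split; auto; try lia.
  - apply (Z.mul_reg_l _ _ (AA f1 f2 f3 f4 f5 f6 f7)); lia.
  - apply (Z.mul_reg_l _ _ (M0 f1 f2 f3 f4 f5 f6 f7 f8)); lia.
Qed.

From Stdlib Require Import ZArith List Lia.
Import V.
Open Scope Z_scope.

Lemma dvd_of_vp p y k : isprime p -> (y = 0 \/ (k <= vp p y)%nat) -> (Z.of_nat p ^ Z.of_nat k | y).
Proof.
  intros Hp [->|H]. apply Z.divide_0_r.
  destruct (Z.eq_dec y 0) as [->|Hy]. apply Z.divide_0_r. apply vp_dvd; auto.
Qed.

Lemma ppow_S p k : Z.of_nat p ^ Z.of_nat (S k) = Z.of_nat p ^ Z.of_nat k * Z.of_nat p.
Proof. rewrite Nat2Z.inj_succ, Z.pow_succ_r by lia. ring. Qed.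

Lemma surj_facts p x0 x1 x2 x3 : isprime p -> 0 < x0 -> 0 < x1 ->
  x0 * x0 = x1 * x2 ^ 3 + x1 ^ 3 * x3 -> Z.gcd (Z.gcd x1 x2) x3 = 1 ->
  let n := vp p x1 in let m := vp p (Z.gcd x1 x2) in let z := vp p x0 in
  (m <= n)%nat /\
  ((3*m < 2*n)%nat -> (2*z = n + 3*m)%nat) /\
  ((2*n < 3*m)%nat -> (2*z = 3*n)%nat) /\
  ((0 < n)%nat -> (3*m = 2*n)%nat -> (3*n <= 2*z)%nat).
Proof.
  intros Hp H0 H1 E G n m z.
  set (W := x2^3 + x1^2*x3).
  assert (EW: x0 * x0 = x1 * W) by (unfold W; rewrite E; ring).
  assert (HW: W <> 0) by (intro HW; rewrite HW in EW; nia).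
  assert (Hz: (2*z = n + vp p W)%nat).
  { unfold z, n. rewrite <- vp_mul by lia. rewrite <- EW. rewrite vp_mul by lia. lia. }
  assert (Hg: 0 < Z.gcd x1 x2).
  { pose proof (Z.gcd_nonneg x1 x2). destruct (Z.eq_dec (Z.gcd x1 x2) 0) as [E0|]; [|lia].
    apply Z.gcd_eq_0 in E0. lia. }
  assert (Hmn: (m <= n)%nat).
  { apply vp_le_of_dvd; auto; try lia. apply Z.gcd_divide_l. }
  assert (Gx2: x2 = 0 \/ (m <= vp p x2)%nat).
  { destruct (Z.eq_dec x2 0); [now left|right]. apply vp_le_of_dvd; auto; try lia. apply Z.gcd_divide_r. }
  assert (Dx2: forall k, (k <= 3*m)%nat -> (Z.of_nat p ^ Z.of_nat k | x2^3)).
  { intros k Hk. apply dvd_of_vp; auto. destruct (Z.eq_dec x2 0) as [->|Hx2]; [now left|right].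
    destruct Gx2 as [|Gx2]; [lia|].
    rewrite vp_pow by lia. cz. lia. }
  assert (Dx1: forall k, (k <= 2*n)%nat -> (Z.of_nat p ^ Z.of_nat k | x1^2*x3)).
  { intros k Hk. apply dvd_of_vp; auto. destruct (Z.eq_dec x3 0) as [->|H3]; [left; ring|right].
    rewrite vp_mul, vp_pow by (try apply Z.pow_nonzero; lia). cz. unfold n in Hk. lia. }
  repeat split; auto.
  -
    intro Hlt. assert (x2 <> 0).
    { intro Ex. subst x2. unfold m in *. rewrite Z.gcd_0_r, Z.abs_eq in Hlt by lia. lia. }
    assert (Hv2: vp p x2 = m).
    { assert (Hm': m = Nat.min n (vp p x2)) by (unfold m, n; apply vp_gcd; auto; lia). lia. }
    assert (vp p W = 3*m)%nat; [|lia].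
    apply vp_exact; auto.
    + unfold W. apply Z.divide_add_r; [apply Dx2|apply Dx1]; lia.
    + intro D. assert (D2: (Z.of_nat p ^ Z.of_nat (S (3*m)) | x2^3)).
      { replace (x2^3) with (W - x1^2*x3) by (unfold W; ring). apply Z.divide_sub_r; [exact D|apply Dx1; lia]. }
      rewrite vp_dvd in D2 by (auto; apply Z.pow_nonzero; lia). rewrite vp_pow in D2 by lia.
      change (Z.to_nat 3) with 3%nat in D2; change (Z.to_nat 2) with 2%nat in D2. lia.
  -
    intro Hlt.
    assert (Hp3: ~ (Z.of_nat p | x3)).
    { intro D. rewrite gcd_one_iff in G. apply (G p Hp). split; auto.
      apply vp_dvd1; auto; lia. }
    assert (H3: x3 <> 0) by (intro; subst; apply Hp3; apply Z.divide_0_r).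
    assert (V3: vp p x3 = 0%nat).
    { destruct (Nat.eq_dec (vp p x3) 0); auto. exfalso; apply Hp3. apply vp_dvd1; auto; lia. }
    assert (vp p W = 2*n)%nat; [|lia].
    apply vp_exact; auto.
    + unfold W. apply Z.divide_add_r; [apply Dx2|apply Dx1]; lia.
    + intro D. assert (D2: (Z.of_nat p ^ Z.of_nat (S (2*n)) | x1^2*x3)).
      { replace (x1^2*x3) with (W - x2^3) by (unfold W; ring). apply Z.divide_sub_r; [exact D|apply Dx2; lia]. }
      rewrite vp_dvd in D2 by (auto; apply Z.neq_mul_0; split; try apply Z.pow_nonzero; lia).
      rewrite vp_mul, vp_pow in D2 by (try apply Z.pow_nonzero; lia). change (Z.to_nat 3) with 3%nat in D2; change (Z.to_nat 2) with 2%nat in D2.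
      unfold n in *. lia.
  - intros Hn He.
    assert (D: (Z.of_nat p ^ Z.of_nat (2*n) | W)).
    { unfold W. apply Z.divide_add_r; [apply Dx2|apply Dx1]; lia. }
    rewrite vp_dvd in D by auto. lia.
Qed.

Definition pr1 (t : nat*nat*nat*nat*nat*nat*nat*nat) := let '(a,_,_,_,_,_,_,_) := t in a.
Definition pr2 (t : nat*nat*nat*nat*nat*nat*nat*nat) := let '(_,a,_,_,_,_,_,_) := t in a.
Definition pr3 (t : nat*nat*nat*nat*nat*nat*nat*nat) := let '(_,_,a,_,_,_,_,_) := t in a.
Definition pr4 (t : nat*nat*nat*nat*nat*nat*nat*nat) := let '(_,_,_,a,_,_,_,_) := t in a.
Definition pr5 (t : nat*nat*nat*nat*nat*nat*nat*nat) := let '(_,_,_,_,a,_,_,_) := t in a.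
Definition pr6 (t : nat*nat*nat*nat*nat*nat*nat*nat) := let '(_,_,_,_,_,a,_,_) := t in a.
Definition pr7 (t : nat*nat*nat*nat*nat*nat*nat*nat) := let '(_,_,_,_,_,_,a,_) := t in a.
Definition pr8 (t : nat*nat*nat*nat*nat*nat*nat*nat) := let '(_,_,_,_,_,_,_,a) := t in a.

Lemma construct_e (pr : nat*nat*nat*nat*nat*nat*nat*nat -> nat) x0 x1 x2 :
  pr (0,0,0,0,0,0,0,0)%nat = 0%nat -> 0 < x1 ->
  exists e, 0 < e /\ forall p, isprime p ->
    vp p e = pr (fv (vp p x1) (vp p (Z.gcd x1 x2)) (vp p x0)).
Proof.
  intros H0 H1. apply (vp_construct x1); [lia|].
  intros p Hp Hpos. apply vp_dvd1; auto; [lia|].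
  destruct (Nat.eq_dec (vp p x1) 0) as [E|E]; [|lia].
  rewrite E in Hpos. unfold fv in Hpos. simpl in Hpos. lia.
Qed.

Lemma mul_div2 a b c d : (a | c) -> (b | d) -> (a * b | c * d).
Proof. intros [x ->] [y ->]. exists (x*y). ring. Qed.

Lemma cop_of a b : (forall p, isprime p -> (Z.of_nat p | a) -> (Z.of_nat p | b) -> False) -> Z.gcd a b = 1.
Proof. intro H. apply gcd_one_iff. intros p Hp [A B]. exact (H p Hp A B). Qed.

Lemma torsor_identity e1 e2 e3 e4 e5 e6 e7 e8 a1 a2 a3 :
  (M0 e1 e2 e3 e4 e5 e6 e7 e8 * a2) * (M0 e1 e2 e3 e4 e5 e6 e7 e8 * a2) -
  (M1 e1 e2 e3 e4 e5 e6 e7 e8 * (-(AA e1 e2 e3 e4 e5 e6 e7 * a1))^3 +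
   M1 e1 e2 e3 e4 e5 e6 e7 e8 ^ 3 * (- a3))
  = (e1^6*e2^12*e3^18*e4^14*e5^10*e6^6*e7^9*e8^2) *
    (e1 ^ 2 * e2 * a1 ^ 3 + e7 * a2 ^ 2 + e4 * e5 ^ 2 * e6 ^ 3 * e8 ^ 4 * a3).
Proof. unfold M0, M1, AA. ring. Qed.

Lemma surj_main x0 x1 x2 x3 : 0 < x0 -> 0 < x1 ->
  x0 * x0 = x1 * x2 ^ 3 + x1 ^ 3 * x3 -> Z.gcd (Z.gcd x1 x2) x3 = 1 ->
  exists e1 e2 e3 e4 e5 e6 e7 e8 a1 a2 a3,
    SNalg e1 e2 e3 e4 e5 e6 e7 e8 a1 a2 a3 /\
    x0 = M0 e1 e2 e3 e4 e5 e6 e7 e8 * a2 /\ x1 = M1 e1 e2 e3 e4 e5 e6 e7 e8 /\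
    x2 = -(AA e1 e2 e3 e4 e5 e6 e7 * a1) /\ x3 = - a3.
Proof.
  intros H0 H1 E G.
  destruct (construct_e pr1 x0 x1 x2 eq_refl H1) as [e1 [P1 V1]].
  destruct (construct_e pr2 x0 x1 x2 eq_refl H1) as [e2 [P2 V2]].
  destruct (construct_e pr3 x0 x1 x2 eq_refl H1) as [e3 [P3 V3]].
  destruct (construct_e pr4 x0 x1 x2 eq_refl H1) as [e4 [P4 V4]].
  destruct (construct_e pr5 x0 x1 x2 eq_refl H1) as [e5 [P5 V5]].
  destruct (construct_e pr6 x0 x1 x2 eq_refl H1) as [e6 [P6 V6]].
  destruct (construct_e pr7 x0 x1 x2 eq_refl H1) as [e7 [P7 V7]].
  destruct (construct_e pr8 x0 x1 x2 eq_refl H1) as [e8 [P8 V8]].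
  assert (Hg: 0 < Z.gcd x1 x2).
  { pose proof (Z.gcd_nonneg x1 x2). destruct (Z.eq_dec (Z.gcd x1 x2) 0) as [E0|]; [|lia].
    apply Z.gcd_eq_0 in E0. lia. }
  assert (PP: forall p, isprime p ->
    let n := vp p x1 in let m := vp p (Z.gcd x1 x2) in let z := vp p x0 in
    let f1 := vp p e1 in let f2 := vp p e2 in let f3 := vp p e3 in let f4 := vp p e4 in
    let f5 := vp p e5 in let f6 := vp p e6 in let f7 := vp p e7 in let f8 := vp p e8 in
  (2*f1+4*f2+6*f3+5*f4+4*f5+3*f6+3*f7+2*f8 = n /\
  2*f1+3*f2+4*f3+3*f4+2*f5+f6+2*f7 = m /\
  3*f1+6*f2+9*f3+7*f4+5*f5+3*f6+5*f7+f8 <= z /\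
  (3*f1+6*f2+9*f3+7*f4+5*f5+3*f6+5*f7+f8 < z ->
     f1=0/\f2=0/\f3=0/\f4=0/\f5=0/\f6=0/\f8=0) /\
  (0 < f8 -> f1=0/\f2=0/\f3=0/\f4=0/\f5=0/\f7=0) /\
  (0 < f7 -> f1=0/\f2=0/\f4=0/\f5=0/\f6=0) /\
  (0 < f6 -> f1=0/\f2=0/\f3=0/\f4=0) /\
  (0 < f5 -> f1=0/\f2=0/\f3=0) /\
  (0 < f4 -> f1=0/\f2=0) /\
  (0 < f3 -> f1=0) /\
  (m = n -> f2=0/\f3=0/\f4=0/\f5=0/\f6=0/\f7=0/\f8=0) /\
  (0 < n -> m = 0 -> f1=0/\f2=0/\f3=0/\f4=0/\f5=0/\f6=0/\f7=0))%nat /\ (m <= n)%nat).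
  { intros p Hp n m z f1 f2 f3 f4 f5 f6 f7 f8.
    destruct (surj_facts p x0 x1 x2 x3 Hp H0 H1 E G) as (A&B&C&D).
    pose proof (fv_surj _ _ _ A B C D) as FS.
    unfold f1, f2, f3, f4, f5, f6, f7, f8.
    rewrite (V1 p Hp), (V2 p Hp), (V3 p Hp), (V4 p Hp), (V5 p Hp), (V6 p Hp), (V7 p Hp), (V8 p Hp).
    fold n m z in FS |- *.
    destruct (fv n m z) as [[[[[[[g1 g2] g3] g4] g5] g6] g7] g8]. simpl. tauto. }
  assert (EM1: x1 = M1 e1 e2 e3 e4 e5 e6 e7 e8).
  { apply vp_eq; [lia|unfold M1; pos|]. intros p Hp. specialize (PP p Hp). simpl in PP.
    unfold M1. vpexp. lia. }
  assert (EAA: Z.gcd x1 x2 = AA e1 e2 e3 e4 e5 e6 e7).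
  { apply vp_eq; [lia|unfold AA; pos|]. intros p Hp. specialize (PP p Hp). simpl in PP.
    unfold AA. vpexp. lia. }
  assert (HM0: 0 < M0 e1 e2 e3 e4 e5 e6 e7 e8) by (unfold M0; pos).
  assert (D0: (M0 e1 e2 e3 e4 e5 e6 e7 e8 | x0)).
  { apply vp_le_dvd; [lia|lia|]. intros p Hp. specialize (PP p Hp). simpl in PP.
    unfold M0. vpexp. lia. }
  destruct D0 as [a2 Ea2].
  assert (Ha2: 0 < a2) by nia.
  assert (D2: (Z.gcd x1 x2 | x2)) by apply Z.gcd_divide_r.
  destruct D2 as [q Eq].
  exists e1, e2, e3, e4, e5, e6, e7, e8, (-q), a2, (-x3).
  assert (X0: x0 = M0 e1 e2 e3 e4 e5 e6 e7 e8 * a2) by lia.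
  assert (X2: x2 = -(AA e1 e2 e3 e4 e5 e6 e7 * -q)) by (rewrite Eq, EAA; ring).
  assert (X3: x3 = - - x3) by ring.
  split; [|tauto].
  unfold SNalg. split; [|repeat split; try lia].
  -
    pose proof (torsor_identity e1 e2 e3 e4 e5 e6 e7 e8 (-q) a2 (-x3)) as TI.
    rewrite <- X0, <- EM1, <- X2, <- X3 in TI. rewrite E in TI.
    replace (x1 * x2 ^ 3 + x1 ^ 3 * x3 - (x1 * x2 ^ 3 + x1 ^ 3 * x3)) with 0 in TI by ring.
    symmetry in TI. apply Z.mul_eq_0 in TI. destruct TI as [TI|TI]; [|exact TI].
    exfalso. assert (0 < e1^6*e2^12*e3^18*e4^14*e5^10*e6^6*e7^9*e8^2) by pos. lia.
  -
    apply cop_of. intros p Hp Dq Dp. specialize (PP p Hp). simpl in PP.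
    apply vp_dvd1 in Dp; [|auto|nz]. revert Dp. vpexp. intro Dp.
    assert (Hmn: vp p (Z.gcd x1 x2) = vp p x1).
    { destruct (Nat.eq_dec (vp p (Z.gcd x1 x2)) (vp p x1)) as [|NE]; auto. exfalso.
      assert (Dx2: (Z.of_nat p ^ Z.of_nat (S (vp p (Z.gcd x1 x2))) | q * Z.gcd x1 x2)).
      { rewrite ppow_S, (Z.mul_comm q). apply mul_div2; [|apply Z.divide_opp_r in Dq; rewrite Z.opp_involutive in Dq; exact Dq].
        apply vp_dvd; auto; lia. }
      rewrite <- Eq in Dx2.
      assert (Dx1: (Z.of_nat p ^ Z.of_nat (S (vp p (Z.gcd x1 x2))) | x1)).
      { apply vp_dvd; auto; lia. }
      pose proof (Z.gcd_greatest _ _ _ Dx1 Dx2) as Dg. rewrite vp_dvd in Dg by (auto; lia). lia. }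
    lia.
  -
    apply cop_of. intros p Hp Da Dp. specialize (PP p Hp). simpl in PP.
    apply vp_dvd1 in Dp; [|auto|nz]. apply vp_dvd1 in Da; [|auto|lia]. revert Dp. vpexp. intro Dp.
    assert (vp p x0 = vp p (M0 e1 e2 e3 e4 e5 e6 e7 e8) + vp p a2)%nat by (rewrite X0; apply vp_mul; lia).
    revert H. unfold M0. vpexp. intro. lia.
  -
    apply cop_of. intros p Hp Da Dp. specialize (PP p Hp). simpl in PP.
    apply vp_dvd1 in Dp; [|auto|nz]. revert Dp. vpexp. intro Dp.
    assert (Dx1: (Z.of_nat p | x1)) by (apply vp_dvd1; auto; lia).
    assert (Hm0: vp p (Z.gcd x1 x2) = 0%nat).
    { destruct (Nat.eq_dec (vp p (Z.gcd x1 x2)) 0) as [|NE]; auto. exfalso.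
      rewrite gcd_one_iff in G. apply (G p Hp). split.
      - apply vp_dvd1; auto; lia.
      - apply Z.divide_opp_r in Da. rewrite Z.opp_involutive in Da. exact Da. }
    lia.
  - apply cop_of. intros p Hp Da Dp. specialize (PP p Hp). simpl in PP.
    apply vp_dvd1 in Dp; [|auto|nz]. apply vp_dvd1 in Da; [|auto|lia]. revert Dp. vpexp. intro Dp. lia.
  - apply cop_of. intros p Hp Da Dp. specialize (PP p Hp). simpl in PP.
    apply vp_dvd1 in Dp; [|auto|nz]. apply vp_dvd1 in Da; [|auto|lia]. revert Dp. vpexp. intro Dp. lia.
  - apply cop_of. intros p Hp Da Dp. specialize (PP p Hp). simpl in PP.
    apply vp_dvd1 in Dp; [|auto|nz]. apply vp_dvd1 in Da; [|auto|lia]. revert Dp. vpexp. intro Dp. lia.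
  - apply cop_of. intros p Hp Da Dp. specialize (PP p Hp). simpl in PP.
    apply vp_dvd1 in Dp; [|auto|nz]. apply vp_dvd1 in Da; [|auto|lia]. revert Dp. vpexp. intro Dp. lia.
  - apply cop_of. intros p Hp Da Dp. specialize (PP p Hp). simpl in PP.
    apply vp_dvd1 in Dp; [|auto|nz]. apply vp_dvd1 in Da; [|auto|lia]. revert Dp. vpexp. intro Dp. lia.
  - apply cop_of. intros p Hp Da Dp. specialize (PP p Hp). simpl in PP.
    apply vp_dvd1 in Dp; [|auto|nz]. apply vp_dvd1 in Da; [|auto|lia]. revert Dp. vpexp. intro Dp. lia.
Qed.

From Stdlib Require Import ZArith List Lia.
Import V.
Open Scope Z_scope.

Lemma fwd_main e1 e2 e3 e4 e5 e6 e7 e8 a1 a2 a3 :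
  SNalg e1 e2 e3 e4 e5 e6 e7 e8 a1 a2 a3 ->
  let x0 := M0 e1 e2 e3 e4 e5 e6 e7 e8 * a2 in
  let x1 := M1 e1 e2 e3 e4 e5 e6 e7 e8 in
  let x2 := -(AA e1 e2 e3 e4 e5 e6 e7 * a1) in
  let x3 := - a3 in
  x0 * x0 = x1 * x2 ^ 3 + x1 ^ 3 * x3 /\ 0 < x0 /\ 0 < x1 /\
  Z.gcd (Z.gcd x1 x2) x3 = 1.
Proof.
  intros HS x0 x1 x2 x3.
  pose proof (gcdA _ _ _ _ _ _ _ _ _ _ _ HS) as GA. fold x1 x2 in GA.
  pose proof (torsor_identity e1 e2 e3 e4 e5 e6 e7 e8 a1 a2 a3) as TI.
  fold x0 x1 x2 x3 in TI.
  destruct HS as (T&H1&H2&H3&H4&H5&H6&H7&H8&Ha2&_&_&Ca3&_).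
  rewrite T, Z.mul_0_r in TI.
  split; [lia|]. split; [unfold x0, M0; pos|]. split; [unfold x1, M1; pos|].
  rewrite GA. apply cop_of. intros p Hp DA D3.
  apply vp_dvd1 in DA; [|auto|unfold AA; nz]. revert DA. unfold AA. vpexp. intro DA.
  rewrite gcd_one_iff in Ca3. apply (Ca3 p Hp). split.
  - unfold x3 in D3. apply Z.divide_opp_r in D3. rewrite Z.opp_involutive in D3. exact D3.
  - apply vp_dvd1; auto. nz. vpexp. lia.
Qed.

Open Scope nat_scope.
From Stdlib Require Import List Lia Classical.
Import ListNotations.

Lemma card_exists {T} (P : T -> Prop) (L : list T) :
  (forall x, P x -> In x L) -> exists n, is_card P n.
Proof.
  intros H.
  assert (G: exists l, NoDup l /\ forall x, In x l <-> (P x /\ In x L)).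
  { clear H. induction L as [|a L IH].
    - exists []. split; [constructor|]. simpl. tauto.
    - destruct IH as [l [Hn Hl]].
      destruct (classic (P a /\ ~ In a l)) as [Ha|Ha].
      + exists (a :: l). split; [constructor; tauto|].
        intro x. simpl. rewrite Hl. split.
        * intros [<-|Hx]; tauto.
        * intros [Px [<-|Hx]]; tauto.
      + exists l. split; auto. intro x. split.
        * intro Hx. apply Hl in Hx. simpl. tauto.
        * simpl. intros [Px [E|Hx]].
          -- subst x. destruct (classic (In a l)) as [I|I]; auto. exfalso; tauto.
          -- apply Hl. tauto. }
  destruct G as [l [Hn Hl]]. exists (length l), l. repeat split; auto.
  - intro Hx. apply Hl in Hx. tauto.
  - intro Hx. apply Hl. auto.
Qed.

Lemma card_unique {T} (P : T -> Prop) n m : is_card P n -> is_card P m -> n = m.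
Proof.
  intros [l1 [N1 [I1 L1]]] [l2 [N2 [I2 L2]]].
  assert (length l1 <= length l2). { apply NoDup_incl_length; auto. intros x Hx. apply I2, I1, Hx. }
  assert (length l2 <= length l1). { apply NoDup_incl_length; auto. intros x Hx. apply I1, I2, Hx. }
  lia.
Qed.

Lemma card_ext {T} (P Q : T -> Prop) n : (forall x, P x <-> Q x) -> is_card P n -> is_card Q n.
Proof. intros H [l [N [I L]]]. exists l. repeat split; auto; intro; [apply H, I|apply I, H]; auto. Qed.

Lemma card_union {T} (P Q : T -> Prop) a b : is_card P a -> is_card Q b ->
  (forall x, P x -> Q x -> False) -> is_card (fun x => P x \/ Q x) (a + b).
Proof.
  intros [l1 [N1 [I1 L1]]] [l2 [N2 [I2 L2]]] D. exists (l1 ++ l2). repeat split.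
  - apply NoDup_app; auto. intros x H1 H2. apply (D x); [apply I1|apply I2]; auto.
  - intro H. apply in_app_or in H. destruct H; [left; apply I1|right; apply I2]; auto.
  - intros [H|H]; apply in_or_app; [left; apply I1|right; apply I2]; auto.
  - rewrite length_app. lia.
Qed.

Lemma card_image {T U} (P : T -> Prop) (Q : U -> Prop) (f : T -> U) n :
  is_card P n -> (forall x y, P x -> P y -> f x = f y -> x = y) ->
  (forall u, Q u <-> exists x, P x /\ u = f x) -> is_card Q n.
Proof.
  intros [l [N [I L]]] Inj HQ. exists (map f l). repeat split.
  - apply NoDup_map_NoDup_ForallPairs; auto. intros x1 y1 Hx Hy. apply Inj; apply I; auto.
  - intro H. apply in_map_iff in H. destruct H as [y [<- Hy]]. apply HQ. exists y. split; auto. apply I; auto.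
  - intro H. apply HQ in H. destruct H as [y [Py ->]]. apply in_map. apply I; auto.
  - rewrite length_map. auto.
Qed.

Lemma card_le_inj {T U} (P : T -> Prop) (f : T -> U) (L : list U) n :
  is_card P n -> (forall x y, P x -> P y -> f x = f y -> x = y) ->
  (forall x, P x -> In (f x) L) -> n <= length L.
Proof.
  intros [l [N [I Ln]]] Inj HL. subst n. rewrite <- (length_map f l).
  apply NoDup_incl_length.
  - apply NoDup_map_NoDup_ForallPairs; auto. intros x1 y1 Hx Hy. apply Inj; apply I; auto.
  - intros u Hu. apply in_map_iff in Hu. destruct Hu as [x [<- Hx]]. apply HL, I, Hx.
Qed.

Lemma card_inj_exists {T U} (P : T -> Prop) (f : T -> U) (L : list U) :
  (forall x y, P x -> P y -> f x = f y -> x = y) -> (forall x, P x -> In (f x) L) ->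
  exists n, is_card P n.
Proof.
  revert P. induction L as [|u L IH]; intros P Inj HL.
  - exists 0. exists []. split; [constructor|split; [|reflexivity]].
    intro x; split; [intros []|intro Hx; exact (HL _ Hx)].
  - destruct (IH (fun x => P x /\ f x <> u)) as [n' Hn'].
    + intros x y [Px _] [Py _]. apply Inj; auto.
    + intros x [Px Hx]. destruct (HL x Px) as [E|I]; [congruence|auto].
    + destruct (classic (exists x0, P x0 /\ f x0 = u)) as [[x0 [P0 E0]]|NE].
      * exists (n' + 1). apply (card_ext (fun x => (P x /\ f x <> u) \/ x = x0)).
        { intro x. split.
          - intros [[Px _]| ->]; auto.
          - intro Px. destruct (classic (f x = u)) as [E|E]; [right|left; auto].
            apply Inj; auto; congruence. }
        apply card_union; auto.
        { exists [x0]. repeat split; [repeat constructor; simpl; tauto| |]; simpl.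
          - intros [E|[]]; auto.
          - intros ->; auto. }
        intros x [_ Hx] ->. auto.
      * exists n'. apply (card_ext (fun x => P x /\ f x <> u)); auto.
        intro x. split; [tauto|]. intro Px. split; auto. intro E. apply NE. exists x; auto.
Qed.

From Stdlib Require Import ClassicalEpsilon.

Lemma card_le_rel {T U} (P : T -> Prop) (Rl : T -> U -> Prop) (L : list U) (u0 : U) n :
  is_card P n -> (forall x, P x -> exists u, Rl x u /\ In u L) ->
  (forall x y u, P x -> P y -> Rl x u -> Rl y u -> x = y) -> n <= length L.
Proof.
  intros HP Ex Inj.
  assert (F: forall x, { u | P x -> Rl x u /\ In u L }).
  { intro x. apply constructive_indefinite_description.
    destruct (classic (P x)) as [Px|Px].
    - destruct (Ex x Px) as [u Hu]. exists u. auto.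
    - exists u0. tauto. }
  apply (card_le_inj P (fun x => proj1_sig (F x)) L n HP).
  - intros x y Px Py E. destruct (F x) as [u Hu], (F y) as [v Hv]. simpl in E. subst v.
    apply (Inj x y u); auto; [apply Hu|apply Hv]; auto.
  - intros x Px. destruct (F x) as [u Hu]. simpl. apply Hu; auto.
Qed.

From Stdlib Require Import ZArith Reals List Lia.
Import ListNotations.
Import V.
Open Scope Z_scope.

Definition SNh (B : R) e1 e2 e3 e4 e5 e6 e7 e8 a1 a2 a3 : Prop :=
  (IZR (M1 e1 e2 e3 e4 e5 e6 e7 e8) <= B)%R /\
  (IZR (Z.abs (AA e1 e2 e3 e4 e5 e6 e7 * a1)) <= B)%R /\
  (IZR (Z.abs a3) <= B)%R /\
  (IZR (M0 e1 e2 e3 e4 e5 e6 e7 e8 * a2) <= B ^ 2)%R.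

Lemma SN_iff B t : SN B t <-> exists e1 e2 e3 e4 e5 e6 e7 e8 a1 a2 a3,
  t = [e1;e2;e3;e4;e5;e6;e7;e8;a1;a2;a3] /\ SNalg e1 e2 e3 e4 e5 e6 e7 e8 a1 a2 a3 /\
  SNh B e1 e2 e3 e4 e5 e6 e7 e8 a1 a2 a3.
Proof.
  split.
  - intro H. do 11 (destruct t as [|? t]; [destruct H|]). destruct t; [|destruct H].
    do 11 eexists. split; [reflexivity|]. unfold SN in H. unfold SNalg, SNh, M1, AA, M0. tauto.
  - intros (e1&e2&e3&e4&e5&e6&e7&e8&a1&a2&a3&->&HA&HH).
    unfold SNalg, SNh, M1, AA, M0 in *. simpl. tauto.
Qed.

Definition sg (b : bool) : Z := if b then 1 else -1.

Definition Phi (s1 s2 : bool) (t : list Z) : Z*Z*Z*Z :=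
  match t with
  | [e1;e2;e3;e4;e5;e6;e7;e8;a1;a2;a3] =>
     (sg s2 * (M0 e1 e2 e3 e4 e5 e6 e7 e8 * a2), sg s1 * M1 e1 e2 e3 e4 e5 e6 e7 e8,
      sg s1 * (-(AA e1 e2 e3 e4 e5 e6 e7 * a1)), sg s1 * (- a3))
  | _ => (0,0,0,0)
  end.

Definition Qs (s1 s2 : bool) (B : R) (x : Z*Z*Z*Z) : Prop :=
  SU B x /\ (let '(x0,x1,_,_) := x in Z.ltb 0 x1 = s1 /\ Z.ltb 0 x0 = s2 /\ x0 <> 0).

Lemma sg_sq s : sg s * sg s = 1.
Proof. destruct s; reflexivity. Qed.

Lemma sg_abs s y : Z.abs (sg s * y) = Z.abs y.
Proof. destruct s; unfold sg; lia. Qed.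

Lemma sg_reg s a b : sg s * a = sg s * b -> a = b.
Proof. destruct s; unfold sg; lia. Qed.

Lemma eq_sign s1 s2 y0 y1 y2 y3 :
  (sg s2*y0)*(sg s2*y0) - ((sg s1*y1)*(sg s1*y2)^3 + (sg s1*y1)^3*(sg s1*y3)) =
  y0*y0 - (y1*y2^3 + y1^3*y3).
Proof.
  transitivity ((sg s2*sg s2)*(y0*y0) - (sg s1*sg s1)^2 * (y1*y2^3 + y1^3*y3)); [ring|].
  rewrite !sg_sq. ring.
Qed.

Lemma gcd_sign s a b c : Z.gcd (Z.gcd (sg s * a) (sg s * b)) (sg s * c) = Z.gcd (Z.gcd a b) c.
Proof.
  destruct s; unfold sg.
  - rewrite !Z.mul_1_l. reflexivity.
  - replace (-1 * a) with (- a) by ring. replace (-1 * b) with (- b) by ring.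
    replace (-1 * c) with (- c) by ring.
    rewrite Z.gcd_opp_l, Z.gcd_opp_r, Z.gcd_opp_r. reflexivity.
Qed.

Lemma Phi_inj s1 s2 B t t' : SN B t -> SN B t' -> Phi s1 s2 t = Phi s1 s2 t' -> t = t'.
Proof.
  intros Ht Ht' E.
 rewrite SN_iff in Ht, Ht'.
  destruct Ht as (e1&e2&e3&e4&e5&e6&e7&e8&a1&a2&a3&->&HA&_).
  destruct Ht' as (f1&f2&f3&f4&f5&f6&f7&f8&b1&b2&b3&->&HB&_).
  simpl in E. injection E as E0 E1 E2 E3.
  apply sg_reg in E0, E1, E2, E3.
  destruct (inj_main _ _ _ _ _ _ _ _ _ _ _ _ _ _ _ _ _ _ _ _ _ _ HA HB E0 E1 E2 E3)
    as (->&->&->&->&->&->&->&->&->&->&->). reflexivity.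
Qed.

Lemma Qs_Phi s1 s2 B x0 x1 x2 x3 : Qs s1 s2 B (x0,x1,x2,x3) -> exists t, SN B t /\ (x0,x1,x2,x3) = Phi s1 s2 t.
Proof.
  intros [(Eq&H1&G&B1&B2&B3&B0) (S1&S2&H0)].
  set (y0 := sg s2 * x0). set (y1 := sg s1 * x1). set (y2 := sg s1 * x2). set (y3 := sg s1 * x3).
  assert (P0: 0 < y0) by (unfold y0; destruct (Z.ltb_spec 0 x0); subst s2; unfold sg; lia).
  assert (P1: 0 < y1) by (unfold y1; destruct (Z.ltb_spec 0 x1); subst s1; unfold sg; lia).
  assert (Ey: y0 * y0 = y1 * y2 ^ 3 + y1 ^ 3 * y3).
  { pose proof (eq_sign s1 s2 x0 x1 x2 x3). fold y0 y1 y2 y3 in H. lia. }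
  assert (Gy: Z.gcd (Z.gcd y1 y2) y3 = 1) by (unfold y1, y2, y3; rewrite gcd_sign; auto).
  destruct (surj_main y0 y1 y2 y3 P0 P1 Ey Gy)
    as (e1&e2&e3&e4&e5&e6&e7&e8&a1&a2&a3&HA&X0&X1&X2&X3).
  exists [e1;e2;e3;e4;e5;e6;e7;e8;a1;a2;a3]. split.
  * rewrite SN_iff. do 11 eexists. split; [reflexivity|]. split; [exact HA|].
    unfold SNh. rewrite <- X0, <- X1.
    replace (Z.abs (AA e1 e2 e3 e4 e5 e6 e7 * a1)) with (Z.abs y2) by (rewrite X2; lia).
    replace (Z.abs a3) with (Z.abs y3) by (rewrite X3; lia).
    unfold y0, y1, y2, y3 in *. rewrite sg_abs.
    rewrite <- (Z.abs_eq (sg s1 * x1)) by lia. rewrite <- (Z.abs_eq (sg s2 * x0)) by lia.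
    rewrite !sg_abs. repeat split; auto.
  * simpl. rewrite <- X0, <- X1, <- X2, <- X3. unfold y0, y1, y2, y3.
    rewrite !Z.mul_assoc, !sg_sq, !Z.mul_1_l. reflexivity.
Qed.

Lemma Phi_Qs s1 s2 B t x0 x1 x2 x3 : SN B t -> (x0,x1,x2,x3) = Phi s1 s2 t -> Qs s1 s2 B (x0,x1,x2,x3).
Proof.
  intros Ht E.
 rewrite SN_iff in Ht.
  destruct Ht as (e1&e2&e3&e4&e5&e6&e7&e8&a1&a2&a3&->&HA&HH).
  destruct (fwd_main _ _ _ _ _ _ _ _ _ _ _ HA) as (Eq&P0&P1&G).
  simpl in E. injection E as X0 X1 X2 X3. subst x0 x1 x2 x3.
  destruct HH as (B1&B2&B3&B0).
  split; [unfold SU; repeat split|].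
  * pose proof (eq_sign s1 s2 (M0 e1 e2 e3 e4 e5 e6 e7 e8 * a2) (M1 e1 e2 e3 e4 e5 e6 e7 e8)
      (-(AA e1 e2 e3 e4 e5 e6 e7 * a1)) (-a3)). lia.
  * destruct s1; unfold sg; lia.
  * rewrite gcd_sign. exact G.
  * rewrite sg_abs, Z.abs_eq by lia. exact B1.
  * rewrite sg_abs, Z.abs_opp. exact B2.
  * rewrite sg_abs, Z.abs_opp. exact B3.
  * rewrite sg_abs, Z.abs_eq by lia. exact B0.
  * split; [|split]; [destruct s1|destruct s2|destruct s2]; unfold sg;
      repeat match goal with |- context [Z.ltb ?a ?b] => destruct (Z.ltb_spec a b) end;
      first [reflexivity | exfalso; lia | lia].
Qed.

Lemma Qs_card s1 s2 B n : is_card (SN B) n -> is_card (Qs s1 s2 B) n.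
Proof.
  intro HN. apply (card_image _ _ (Phi s1 s2) n HN).
  - intros t t' Ht Ht' E. exact (Phi_inj s1 s2 B t t' Ht Ht' E).
  - intros [[[x0 x1] x2] x3]. split.
    + apply Qs_Phi.
    + intros [t [Ht E]]. exact (Phi_Qs s1 s2 B t x0 x1 x2 x3 Ht E).
Qed.

From Stdlib Require Import ZArith List Lia.
Import V.
Open Scope Z_scope.

Lemma cube_inj a b : a^3 = b^3 -> a = b.
Proof.
  intro H. assert ((a - b) * (a*a + a*b + b*b) = 0) by nia.
  apply Z.mul_eq_0 in H0. destruct H0; [lia|]. nia.
Qed.

Lemma is_cube x : x <> 0 -> (forall p, isprime p -> exists k, vp p x = (3 * k)%nat) ->
  exists c, x = c^3.
Proof.
  intros Hx H.
  destruct (vp_construct x (fun p => vp p x / 3)%nat Hx) as [c [Hc Hv]].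
  { intros p Hp Hpos. apply vp_dvd1; auto. destruct (H p Hp) as [k Hk]. rewrite Hk in *.
    rewrite Nat.mul_comm, Nat.div_mul in Hpos by lia. lia. }
  assert (E: Z.abs x = c^3).
  { apply vp_eq; [lia|pos|]. intros p Hp. rewrite vp_abs, vp_pow by lia.
    rewrite (Hv p Hp). destruct (H p Hp) as [k Hk]. rewrite Hk.
    rewrite Nat.mul_comm, Nat.div_mul by lia. cz. lia. }
  destruct (Z.abs_spec x) as [[_ A]|[_ A]].
  - exists c. lia.
  - exists (-c). replace ((-c)^3) with (-(c^3)) by ring. lia.
Qed.

Lemma SU0_cubes x1 x2 x3 : x1 <> 0 -> 0 = x1 * x2 ^ 3 + x1 ^ 3 * x3 ->
  Z.gcd (Z.gcd x1 x2) x3 = 1 -> exists s t, x1 = s^3 /\ x3 = t^3.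
Proof.
  intros H1 E G.
  assert (E2: x2^3 = - (x1^2 * x3)).
  { apply (Z.mul_reg_l _ _ x1); auto. rewrite Z.mul_opp_r. nia. }
  destruct (Z.eq_dec x2 0) as [->|H2].
  - assert (x3 = 0).
    { assert (x1^2 * x3 = 0) by (simpl in E2; lia). apply Z.mul_eq_0 in H. destruct H; auto.
      exfalso. apply (Z.pow_nonzero x1 2) in H1; lia. }
    subst x3. rewrite Z.gcd_0_r, Z.gcd_0_r in G.
    exists (Z.sgn x1), 0. split; [|reflexivity].
    destruct (Z.abs_spec x1) as [[_ A]|[_ A]]; [rewrite Z.sgn_pos by lia|rewrite Z.sgn_neg by lia]; simpl; lia.
  - assert (H3: x3 <> 0).
    { intro. subst x3. rewrite Z.mul_0_r, Z.opp_0 in E2. apply (Z.pow_nonzero x2 3) in H2; lia. }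
    assert (V: forall p, isprime p -> (3 * vp p x2 = 2 * vp p x1 + vp p x3)%nat).
    { intros p Hp. assert (vp p (x2^3) = vp p (-(x1^2*x3))) by (rewrite E2; reflexivity).
      rewrite vp_opp in H. rewrite vp_mul, !vp_pow in H by (try apply Z.pow_nonzero; lia). cz. lia. }
    assert (M: forall p, isprime p -> vp p x1 = 0%nat \/ vp p x2 = 0%nat \/ vp p x3 = 0%nat).
    { intros p Hp. rewrite gcd_one_iff in G. specialize (G p Hp).
      destruct (Nat.eq_dec (vp p x1) 0); auto. destruct (Nat.eq_dec (vp p x2) 0); auto.
      destruct (Nat.eq_dec (vp p x3) 0); auto. exfalso. apply G. split.
      - apply Z.gcd_greatest; apply vp_dvd1; auto; lia.
      - apply vp_dvd1; auto; lia. }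
    destruct (is_cube x1 H1) as [s Hs].
    { intros p Hp. specialize (V p Hp). destruct (M p Hp) as [A|[A|A]].
      - exists 0%nat. lia.
      - exists 0%nat. lia.
      - exists (vp p x1 - vp p x2)%nat. lia. }
    destruct (is_cube x3 H3) as [t Ht].
    { intros p Hp. specialize (V p Hp). destruct (M p Hp) as [A|[A|A]].
      - exists (vp p x2). lia.
      - exists 0%nat. lia.
      - exists 0%nat. lia. }
    exists s, t. auto.
Qed.

From Stdlib Require Import ZArith Reals List Lia Lra Psatz.
Import ListNotations.
Import V.

Open Scope Z_scope.

Definition zrange (K : Z) : list Z := map (fun n => Z.of_nat n - K) (seq 0 (Z.to_nat (2*K+1))).

Lemma in_zrange K x : Z.abs x <= K -> In x (zrange K).
Proof.
  intro H. unfold zrange. apply in_map_iff. exists (Z.to_nat (x + K)). split.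
  - rewrite Z2Nat.id by lia. ring.
  - apply in_seq. lia.
Qed.

Lemma length_zrange K : length (zrange K) = Z.to_nat (2*K+1).
Proof. unfold zrange. rewrite length_map, length_seq. reflexivity. Qed.

Lemma abs_lt_up (B : R) x : (IZR (Z.abs x) <= B)%R -> Z.abs x <= up B.
Proof.
  intro H. destruct (archimed B) as [A _]. apply Z.lt_le_incl, lt_IZR. lra.
Qed.

Lemma SU_finite B : (1 <= B)%R -> exists n, is_card (SU B) n.
Proof.
  intro HB. set (N := up B).
  apply (card_exists _ (list_prod (list_prod (list_prod (zrange (N*N)) (zrange N)) (zrange N)) (zrange N))).
  intros [[[x0 x1] x2] x3] (_&_&_&B1&B2&B3&B0).
  assert (HN: (B < IZR N)%R) by (destruct (archimed B); unfold N; lra).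
  repeat apply in_prod; apply in_zrange; try (apply abs_lt_up; auto).
  assert (IZR (Z.abs x0) < IZR (N * N))%R.
  { rewrite mult_IZR. apply Rle_lt_trans with (B^2)%R; auto. simpl. nra. }
  apply lt_IZR in H. lia.
Qed.

Lemma SN_finite B : (1 <= B)%R -> exists n, is_card (SN B) n.
Proof.
  intro HB. destruct (SU_finite B HB) as [m [lU [_ [IU _]]]].
  apply (card_inj_exists (SN B) (Phi true true) lU).
  - intros t t' Ht Ht' E. exact (Phi_inj true true B t t' Ht Ht' E).
  - intros t Ht. apply IU. destruct (Phi true true t) as [[[x0 x1] x2] x3] eqn:E.
    apply (Phi_Qs true true B t x0 x1 x2 x3 Ht (eq_sym E)).
Qed.

Definition SU0 (B : R) (x : Z*Z*Z*Z) : Prop := SU B x /\ (let '(x0,_,_,_) := x in x0 = 0).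

Lemma SU_count B nN n0 : is_card (SN B) nN -> is_card (SU0 B) n0 ->
  is_card (SU B) (n0 + (nN + (nN + (nN + nN))))%nat.
Proof.
  intros HN H0.
  apply (card_ext (fun x => SU0 B x \/ (Qs true true B x \/ (Qs true false B x \/
     (Qs false true B x \/ Qs false false B x))))).
  - intros [[[x0 x1] x2] x3]. unfold SU0, Qs. split.
    + intros [[H _]|[[H _]|[[H _]|[[H _]|[H _]]]]]; exact H.
    + intro H. destruct (Z.eq_dec x0 0) as [E|E]; [left; auto|right].
      destruct (Z.ltb 0 x1) eqn:E1, (Z.ltb 0 x0) eqn:E0; tauto.
  - apply card_union; [exact H0| |].
    + apply card_union; [apply Qs_card; auto| |].
      * apply card_union; [apply Qs_card; auto| |].
        -- apply card_union; [apply Qs_card; auto|apply Qs_card; auto|].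
           intros [[[x0 x1] x2] x3]. unfold Qs. intros (_&A&C&_) (_&B'&D&_). congruence.
        -- intros [[[x0 x1] x2] x3]. unfold Qs. intros (_&A&C&_) [(_&B'&D&_)|(_&B'&D&_)]; congruence.
      * intros [[[x0 x1] x2] x3]. unfold Qs. intros (_&A&C&_) [(_&B'&D&_)|[(_&B'&D&_)|(_&B'&D&_)]]; congruence.
    + intros [[[x0 x1] x2] x3]. unfold Qs, SU0. intros (_&A) [(_&_&_&D)|[(_&_&_&D)|[(_&_&_&D)|(_&_&_&D)]]]; congruence.
Qed.

Open Scope R_scope.

Lemma Rpow13_facts B : 1 <= B ->
  1 <= Rpower B (1/3) /\ Rpower B (1/3) ^ 3 = B /\ Rpower B (1/3) ^ 2 = Rpower B (2/3).
Proof.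
  intro HB. split; [|split].
  - apply Rle_trans with (Rpower B 0); [rewrite Rpower_O; lra|apply Rle_Rpower; lra].
  - rewrite <- Rpower_pow by (apply exp_pos). rewrite Rpower_mult.
    replace (1/3 * INR 3) with 1 by (simpl; field). apply Rpower_1. lra.
  - rewrite <- Rpower_pow by (apply exp_pos). rewrite Rpower_mult.
    f_equal. simpl. field.
Qed.

Lemma cube_lt a b : 0 <= a < b -> a ^ 3 < b ^ 3.
Proof.
  intro H. assert (0 < (b - a) * (a*a + a*b + b*b)).
  { apply Rmult_lt_0_compat; [lra|]. assert (0 < b*b) by nra. nra. }
  replace (b^3) with (a^3 + (b - a) * (a*a + a*b + b*b)) by ring. lra.
Qed.

Lemma SU0_bound B n0 : 1 <= B -> is_card (SU0 B) n0 -> INR n0 <= 9 * Rpower B (2/3).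
Proof.
  intros HB H0. destruct (Rpow13_facts B HB) as (R1&R3&R2).
  set (Rr := Rpower B (1/3)) in *.
  set (K := (up Rr - 1)%Z).
  destruct (archimed Rr) as [A1 A2].
  assert (HK: IZR K <= Rr) by (unfold K; rewrite minus_IZR; lra).
  assert (HK1: (1 <= K)%Z).
  { assert (IZR 1 < IZR (up Rr)) by lra. apply lt_IZR in H. unfold K. lia. }
  assert (Bnd: forall s x1, x1 = (s^3)%Z -> IZR (Z.abs x1) <= B -> (Z.abs s <= K)%Z).
  { intros s x1 -> Hx. assert (IZR (Z.abs s) <= Rr).
    { destruct (Rle_or_lt (IZR (Z.abs s)) Rr) as [|Lt]; auto. exfalso.
      assert (Rr ^ 3 < IZR (Z.abs s) ^ 3) by (apply cube_lt; lra).
      rewrite pow_IZR in H. rewrite Z.abs_pow in Hx. simpl Z.of_nat in H. lra. }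
    assert (IZR (Z.abs s) < IZR (up Rr)) by lra. apply lt_IZR in H1. unfold K. lia. }
  pose proof (card_le_rel (SU0 B)
    (fun x u => let '(x0,x1,x2,x3) := x in x1 = (fst u ^ 3)%Z /\ x3 = (snd u ^ 3)%Z)
    (list_prod (zrange K) (zrange K)) (0%Z,0%Z) n0 H0) as Le.
  assert (n0 <= length (list_prod (zrange K) (zrange K)))%nat.
  { apply Le.
    - intros [[[x0 x1] x2] x3] ((Eq&H1&G&B1&B2&B3&B0)&E0). subst x0.
      destruct (SU0_cubes x1 x2 x3 H1 Eq G) as (s&t&Es&Et).
      exists (s,t). split; [split; auto|]. apply in_prod; apply in_zrange; eapply Bnd; eauto.
    - intros [[[x0 x1] x2] x3] [[[y0 y1] y2] y3] [s t] ((Eq&H1&_)&E0) ((Eq'&_)&E0') (A&C) (A'&C').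
      cbn [fst snd] in A, C, A', C'. subst x0 y0 x1 x3. subst y1 y3.
      assert (E2: (x2^3 = y2^3)%Z).
      { apply (Z.mul_reg_l _ _ (s^3)%Z); auto. lia. }
      apply cube_inj in E2. rewrite E2. reflexivity. }
  rewrite length_prod, length_zrange in H.
  apply le_INR in H. rewrite mult_INR in H.
  assert (EK: INR (Z.to_nat (2*K+1)) = IZR (2*K+1)) by (rewrite INR_IZR_INZ, Z2Nat.id; [reflexivity|lia]).
  rewrite EK, plus_IZR, mult_IZR in H. rewrite <- R2.
  assert (IZR 1 <= IZR K) by (apply IZR_le; lia).
  simpl. nra.
Qed.

Theorem lemma9p2 :
  exists C B0 : R, 0 < C /\ 1 <= B0 /\
    forall B : R, B0 <= B ->
      exists nU nN : nat,
        is_card (SU B) nU /\ is_card (SN B) nN /\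
        Rabs (INR nU / 2 - 2 * INR nN) <= C * Rpower B (2 / 3).
Proof.
  exists 5, 1. split; [lra|split; [lra|]]. intros B HB.
  destruct (SN_finite B HB) as [nN HN].
  destruct (SU_finite B HB) as [m [lU [_ [IU _]]]].
  destruct (card_exists (SU0 B) lU) as [n0 H0].
  { intros x [Hx _]. apply IU. exact Hx. }
  exists (n0 + (nN + (nN + (nN + nN))))%nat, nN.
  split; [apply SU_count; auto|]. split; [exact HN|].
  pose proof (SU0_bound B n0 HB H0) as Bd.
  assert (Pos: 0 < Rpower B (2/3)) by apply exp_pos.
  rewrite !plus_INR.
  replace ((INR n0 + (INR nN + (INR nN + (INR nN + INR nN)))) / 2 - 2 * INR nN) with (INR n0 / 2) by field.
  pose proof (pos_INR n0).
  rewrite Rabs_right by lra. lra.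
Qed.
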